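(* Let $c\in\{0,1\}$ and let $f\colon M^4\to\mathbb{Q}_c^{4+m}$ be an isometric immersion of an oriented Riemannian four-manifold. Suppose that at a point $x$ there is an oriented orthonormal frame $\{e_1,\dots,e_4\}$ of $T_xM$ such that, with $\alpha_{ij}=\alpha_f(e_i,e_j)$, $\alpha_{11}=\alpha_{22}$, $\alpha_{33}=\alpha_{44}$, $\alpha_{12}=\alpha_{34}=0$, $\|\alpha_{23}\|=\|\alpha_{14}\|$, $\|\alpha_{24}\|=\|\alpha_{13}\|$, $\langle\alpha_{14}+\alpha_{23},\alpha_{13}-\alpha_{24}\rangle=0$, $\langle\alpha_{13}+\alpha_{24},\alpha_{14}-\alpha_{23}\rangle=0$, and $\|\alpha_{13}\|^2+\|\alpha_{14}\|^2=c+\langle\alpha_{11},\alpha_{44}\rangle$. Let $e_{ij}=e_i\wedge e_j$, $\eta_1=\frac1{\sqrt2}(e_{12}+e_{34})$, $\eta_2=\frac1{\sqrt2}(e_{13}-e_{24})$, $\eta_3=\frac1{\sqrt2}(e_{14}+e_{23})$ (a basis of $\Lambda^2_+T_xM$) and $\eta_{i+3}=\ast\eta_i$-type anti-self-dual partners $\eta_4=\frac1{\sqrt2}(e_{12}-e_{34})$, $\eta_5=\frac1{\sqrt2}(e_{13}+e_{24})$, $\eta_6=\frac1{\sqrt2}(e_{14}-e_{23})$ (a basis of $\Lambda^2_-T_xM$). Then at $x$: (i) With respect to $\{\eta_1,\eta_2,\eta_3\}$ and $\{\eta_4,\eta_5,\eta_6\}$, the operators $\mathcal B^{[2]}_\pm$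 have matrices $$\begin{bmatrix}\mu^\pm_1&a^\pm_1&a^\pm_2\\ a^\pm_1&\mu^\pm_2&0\\ a^\pm_2&0&\mu^\pm_3\end{bmatrix},$$ where $\mu^\pm_1=\|\alpha_{14}\pm\alpha_{23}\|^2+\|\alpha_{13}\mp\alpha_{24}\|^2$, $\mu^\pm_2=\|\alpha_{11}-\alpha_{44}\|^2+4\|\alpha_{13}\|^2+2(\|\alpha_{14}\|\|\alpha_{23}\|\mp\langle\alpha_{14},\alpha_{23}\rangle)$, $\mu^\pm_3=\|\alpha_{11}-\alpha_{44}\|^2+4\|\alpha_{14}\|^2+2(\|\alpha_{13}\|\|\alpha_{24}\|\pm\langle\alpha_{13},\alpha_{24}\rangle)$, $a^\pm_1=\langle\alpha_{23}\pm\alpha_{14},\alpha_{44}-\alpha_{11}\rangle$, $a^\pm_2=\langle\alpha_{24}\mp\alpha_{13},\alpha_{44}-\alpha_{11}\rangle$. (ii) If $\ker\mathcal B^{[2]}_+\ne0$ at $x$, then one of: (ii1) $\alpha_{14}+\alpha_{23}=0=\alpha_{13}-\alpha_{24}$ and $a^+_1=a^+_2=0$; (ii2) $\alpha_{13}=\alpha_{24}=0$, $\alpha_{23}=\alpha_{14}\ne0$ and $\alpha_{44}-\alpha_{11}=2\rho\,\alpha_{14}$ for some $\rho\in\mathbb{R}$; (ii3) $\alpha_{14}=\alpha_{23}=0$, $\alpha_{24}=-\alpha_{13}\ne0$ and $\alpha_{44}-\alpha_{11}=2\rho\,\alpha_{13}$ for some $\rho\in\mathbb{R}$. (iii) If $\ker\mathcal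 B^{[2]}_-\ne0$ at $x$, then one of: (iii1) $\alpha_{14}-\alpha_{23}=0=\alpha_{13}+\alpha_{24}$ and $a^-_1=a^-_2=0$; (iii2) $\alpha_{13}=\alpha_{24}=0$, $\alpha_{23}=-\alpha_{14}\ne0$ and $\alpha_{44}-\alpha_{11}=2\rho\,\alpha_{14}$ for some $\rho\in\mathbb{R}$; (iii3) $\alpha_{14}=\alpha_{23}=0$, $\alpha_{24}=\alpha_{13}\ne0$ and $\alpha_{44}-\alpha_{11}=2\rho\,\alpha_{13}$ for some $\rho\in\mathbb{R}$. Moreover, in cases (ii2), (ii3), (iii2), (iii3), the normal curvature tensor of $f$ vanishes at $x$ and the first normal space $N_1f(x)=\operatorname{span}\{\alpha_f(X,Y):X,Y\in T_xM\}$ satisfies $1\le\dim N_1f(x)\le2$.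
   Context: $\mathbb{Q}_c^{N}$ is $\mathbb{R}^N$ ($c=0$) or the unit sphere ($c=1$); $\alpha_f$ is the second fundamental form. $\Lambda^2T_xM$ carries the inner product $\langle\langle v_1\wedge v_2,w_1\wedge w_2\rangle\rangle=\det(\langle v_i,w_j\rangle)$; $\ast$ is the Hodge star and $\Lambda^2_\pm T_xM$ its $\pm1$ eigenspaces. The Bochner–Weitzenböck operator $\mathcal B^{[2]}$ is the endomorphism of $\Lambda^2T_xM$ with $\langle\langle\mathcal B^{[2]}(v_1\wedge v_2),w_1\wedge w_2\rangle\rangle=\mathrm{Ric}(v_1,w_1)\langle v_2,w_2\rangle+\mathrm{Ric}(v_2,w_2)\langle v_1,w_1\rangle-\mathrm{Ric}(v_1,w_2)\langle v_2,w_1\rangle-\mathrm{Ric}(v_2,w_1)\langle v_1,w_2\rangle-2\langle R(v_1,v_2)w_2,w_1\rangle$, with $R(X,Y)=[\nabla_X,\nabla_Y]-\nabla_{[X,Y]}$, $\mathrm{Ric}(X,Y)=\sum_i\langle R(X,E_i)E_i,Y\rangle$. $\Lambda^2_\pm T_xM$ are $\mathcal B^{[2]}$-invariant and $\mathcal B^{[2]}_\pm$ denote the restrictions. The normal curvature tensor is $R^\perp(X,Y)\xi=\alpha_f(X,A_\xi Y)-\alpha_f(A_\xi X,Y)$, where $\langle A_\xi X,Y\rangle=\langle\alpha_f(X,Y),\xi\rangle$. *)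

(* Defs.v *)
(* Pointwise (linear-algebraic) model of Lemma 3.3:
   T_xM = R^4 with the oriented orthonormal frame e_1..e_4 = standard basis
   (indices 0..3 in Rocq), the normal space N_xM = R^m ('rV[R]_m),
   alpha_f given by the 16 vectors al i j = alpha_f(e_i,e_j). *)
From HB Require Import structures.
From mathcomp Require Import all_boot all_order all_algebra.
From mathcomp Require Import reals.
Set Implicit Arguments. Unset Strict Implicit. Unset Printing Implicit Defensive.
Import Order.TTheory GRing.Theory Num.Theory.
Local Open Scope ring_scope.

Section Defs.
Variable R : realType.
Variable m : nat.

Definition dot (u v : 'rV[R]_m) : R := \sum_(i < m) u 0 i * v 0 i.
Definition nrm (u : 'rV[R]_m) : R := Num.sqrt (dot u u).

Variable alpha : 'I_4 -> 'I_4 -> 'rV[R]_m.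
Variable c : R.

(* alpha on nat indices (0-based: al 0 0 = alpha_11 of the paper) *)
Definition al (i j : nat) : 'rV[R]_m := alpha (inord i) (inord j).
Definition kd (i j : nat) : R := (i == j)%:R.

(* <R(e_i,e_j)e_k, e_l>, Gauss equation for f : M -> Q_c^{4+m},
   with R(X,Y) = [nabla_X,nabla_Y] - nabla_[X,Y] *)
Definition Rc (i j k l : nat) : R :=
  c * (kd j k * kd i l - kd i k * kd j l)
  + dot (al j k) (al i l) - dot (al i k) (al j l).

Definition Ric (i j : nat) : R := \sum_(k < 4) Rc i k k j.

(* << B^[2](e_a ^ e_b), e_p ^ e_q >> *)
Definition Bb (a b p q : nat) : R :=
  Ric a p * kd b q + Ric b q * kd a p - Ric a q * kd b p - Ric b p * kd a q
  - 2 * Rc a b q p.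

(* Lambda^2 R^4 with orthonormal basis e_12,e_13,e_14,e_23,e_24,e_34,
   indexed 0..5; bivectors are coefficient columns 'cV_6. *)
Definition pfst (k : nat) : nat := nth 0%N [:: 0; 0; 0; 1; 1; 2]%N k.
Definition psnd (k : nat) : nat := nth 0%N [:: 1; 2; 3; 2; 3; 3]%N k.

(* matrix of B^[2] in the basis e_ij : column l = coefficients of B(e_l) *)
Definition Bmat : 'M[R]_6 :=
  \matrix_(k < 6, l < 6) Bb (pfst l) (psnd l) (pfst k) (psnd k).

(* normal curvature: R^perp(e_i,e_j) xi = alpha(e_i, A_xi e_j) - alpha(A_xi e_i, e_j),
   with A_xi e_j = sum_k <alpha(e_j,e_k), xi> e_k *)
Definition Rperp (i j : nat) (xi : 'rV[R]_m) : 'rV[R]_m :=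
  \sum_(k < 4) (dot (al j k) xi *: al i k - dot (al i k) xi *: al k j).

Definition normally_flat : Prop :=
  forall (i j : 'I_4) (xi : 'rV[R]_m), Rperp i j xi = 0.

(* first normal space N_1 = span{alpha(e_i,e_j)}; its dimension is the rank
   of the 16 x m matrix whose rows are the alpha(e_i,e_j) *)
Definition N1mx : 'M[R]_(16, m) :=
  \matrix_(k < 16, j < m) (al (k %/ 4) (k %% 4)) 0 j.
Definition dimN1 : nat := \rank N1mx.

End Defs.

Definition mkbv (R : nzRingType) (x12 x13 x14 x23 x24 x34 : R) : 'cV[R]_6 :=
  \col_(i < 6) nth 0 [:: x12; x13; x14; x23; x24; x34] i.

Definition bc (R : nzRingType) (w : 'cV[R]_6) (k : nat) : R := w (inord k) 0.

(* Hodge star for the orientation e_1 ^ e_2 ^ e_3 ^ e_4: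
   *e12 = e34, *e13 = -e24, *e14 = e23, *e23 = e14, *e24 = -e13, *e34 = e12 *)
Definition hodge (R : nzRingType) (w : 'cV[R]_6) : 'cV[R]_6 :=
  mkbv (bc w 5) (- bc w 4) (bc w 3) (bc w 2) (- bc w 1) (bc w 0).

Definition s2 (R : realType) : R := (Num.sqrt 2)^-1.
Definition eta1 (R : realType) : 'cV[R]_6 := mkbv (s2 R) 0 0 0 0 (s2 R).
Definition eta2 (R : realType) : 'cV[R]_6 := mkbv 0 (s2 R) 0 0 (- s2 R) 0.
Definition eta3 (R : realType) : 'cV[R]_6 := mkbv 0 0 (s2 R) (s2 R) 0 0.
Definition eta4 (R : realType) : 'cV[R]_6 := mkbv (s2 R) 0 0 0 0 (- s2 R).
Definition eta5 (R : realType) : 'cV[R]_6 := mkbv 0 (s2 R) 0 0 (s2 R) 0.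
Definition eta6 (R : realType) : 'cV[R]_6 := mkbv 0 0 (s2 R) (- s2 R) 0 0.

Definition mx3 (R : nzRingType) (B : 'M[R]_6) (v1 v2 v3 : 'cV[R]_6) : 'M[R]_3 :=
  \matrix_(k < 3, l < 3)
    ((nth v1 [:: v1; v2; v3] k)^T *m B *m (nth v1 [:: v1; v2; v3] l)) 0 0.

Definition symmx3 (R : nzRingType) (mu1 mu2 mu3 a1 a2 : R) : 'M[R]_3 :=
  \matrix_(k < 3, l < 3)
    nth 0 (nth [::] [:: [:: mu1; a1; a2]; [:: a1; mu2; 0]; [:: a2; 0; mu3]] k) l.

(* ker B_pm != 0 : some nonzero w in Lambda^2_pm (i.e. *w = pm w) with B w = 0 *)
Definition ker_plus_nz (R : nzRingType) (B : 'M[R]_6) : Prop :=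
  exists w : 'cV[R]_6, w != 0 /\ hodge w = w /\ B *m w = 0.
Definition ker_minus_nz (R : nzRingType) (B : 'M[R]_6) : Prop :=
  exists w : 'cV[R]_6, w != 0 /\ hodge w = - w /\ B *m w = 0.

(* Main.v *)
Require Import Defs.
From HB Require Import structures.
From mathcomp Require Import all_boot all_order all_algebra.
From mathcomp Require Import reals.
From mathcomp Require Import ring lra.
Import Order.TTheory GRing.Theory Num.Theory.
Local Open Scope ring_scope.

Lemma dotC (R : realType) m (u v : 'rV[R]_m) : dot u v = dot v u.
Proof. by apply: eq_bigr => i _; rewrite mulrC. Qed.
Lemma dotDl (R : realType) m (u v w : 'rV[R]_m) : dot (u + v) w = dot u w + dot v w.
Proof. by rewrite /dot -big_split; apply: eq_bigr => i _; rewrite !mxE mulrDl. Qed.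
Lemma dotDr (R : realType) m (u v w : 'rV[R]_m) : dot w (u + v) = dot w u + dot w v.
Proof. by rewrite dotC dotDl !(dotC _ _ w). Qed.
Lemma dotZl (R : realType) m (a : R) (u v : 'rV[R]_m) : dot (a *: u) v = a * dot u v.
Proof. by rewrite /dot big_distrr; apply: eq_bigr => i _; rewrite !mxE -mulrA. Qed.
Lemma dotZr (R : realType) m (a : R) (u v : 'rV[R]_m) : dot v (a *: u) = a * dot v u.
Proof. by rewrite dotC dotZl dotC. Qed.
Lemma dotNl (R : realType) m (u v : 'rV[R]_m) : dot (- u) v = - dot u v.
Proof. by rewrite -scaleN1r dotZl mulN1r. Qed.
Lemma dotNr (R : realType) m (u v : 'rV[R]_m) : dot v (- u) = - dot v u.
Proof. by rewrite -scaleN1r dotZr mulN1r. Qed.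
Lemma dot0l (R : realType) m (u : 'rV[R]_m) : dot 0 u = 0.
Proof. by rewrite -(scale0r 0) dotZl mul0r. Qed.
Lemma dot0r (R : realType) m (u : 'rV[R]_m) : dot u 0 = 0.
Proof. by rewrite dotC dot0l. Qed.
Lemma dot_ge0 (R : realType) m (u : 'rV[R]_m) : 0 <= dot u u.
Proof. by apply: sumr_ge0 => i _; rewrite -expr2 sqr_ge0. Qed.
Lemma dot_eq0 (R : realType) m (u : 'rV[R]_m) : dot u u = 0 -> u = 0.
Proof.
move=> /eqP; rewrite psumr_eq0 => [/allP H|i _]; last by rewrite -expr2 sqr_ge0.
apply/rowP => j; rewrite mxE.
by have := H j (mem_index_enum _); rewrite /= mulf_eq0 orbb => /eqP.
Qed.
Lemma nrm2 (R : realType) m (u : 'rV[R]_m) : nrm u ^+ 2 = dot u u.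
Proof. by rewrite /nrm sqr_sqrtr // dot_ge0. Qed.
Lemma alC (R : realType) m (alpha : 'I_4 -> 'I_4 -> 'rV[R]_m)
  (hsym : forall i j : 'I_4, alpha i j = alpha j i) i j : al alpha i j = al alpha j i.
Proof. by rewrite /al hsym. Qed.
Lemma sum6 (R : realType) (F : 'I_6 -> R) : \sum_(i < 6) F i =
  F (inord 0) + F (inord 1) + F (inord 2) + F (inord 3) + F (inord 4) + F (inord 5).
Proof.
rewrite !big_ord_recr big_ord0 /= add0r.
by congr (_+_+_+_+_+_); congr F; apply/val_inj; rewrite /= inordK.
Qed.
Lemma quad (R : realType) (B : 'M[R]_6) (u v : 'cV[R]_6) :
  (u^T *m B *m v) 0 0 = \sum_(a < 6) \sum_(b < 6) u a 0 * B a b * v b 0.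
Proof.
rewrite mxE; under eq_bigr => j _ do rewrite mxE big_distrl.
rewrite exchange_big; apply: eq_bigr => i _; apply: eq_bigr => j _.
by rewrite !mxE.
Qed.
Arguments alC {R m alpha} hsym i j.
Arguments dotC {R m} u v.
Lemma mkbvE (R : nzRingType) (x0 x1 x2 x3 x4 x5 : R) k : (k < 6)%N ->
  (mkbv x0 x1 x2 x3 x4 x5) (inord k) 0 = nth 0 [:: x0; x1; x2; x3; x4; x5] k.
Proof. by move=> hk; rewrite mxE inordK. Qed.
Definition tab (R : realType) m (A P x y z w : 'rV[R]_m) (i j : nat) : 'rV[R]_m :=
  match i, j with
  | 0%N, 0%N => A | 1%N, 1%N => A | 2%N, 2%N => P | 3%N, 3%N => P
  | 0%N, 2%N => x | 2%N, 0%N => x | 0%N, 3%N => y | 3%N, 0%N => y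
  | 1%N, 2%N => z | 2%N, 1%N => z | 1%N, 3%N => w | 3%N, 1%N => w
  | _, _ => 0 end.
Arguments tab {R m} A P x y z w i j.
Arguments dot_ge0 {R m} u.
Arguments dot_eq0 {R m} u.
Arguments nrm2 {R m} u.
Definition tabR (R : realType) (A P x y z w : R) (i j : nat) : R :=
  match i, j with
  | 0%N, 0%N => A | 1%N, 1%N => A | 2%N, 2%N => P | 3%N, 3%N => P
  | 0%N, 2%N => x | 2%N, 0%N => x | 0%N, 3%N => y | 3%N, 0%N => y
  | 1%N, 2%N => z | 2%N, 1%N => z | 1%N, 3%N => w | 3%N, 1%N => w
  | _, _ => 0 end.
Arguments tabR {R} A P x y z w i j.

Definition e1h (R : realType) : 'cV[R]_6 := mkbv 1 0 0 0 0 1.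
Lemma eta1E (R : realType) : eta1 R = s2 R *: e1h R.
Proof.
apply/matrixP => i j; rewrite !mxE.
by case: i => [[|[|[|[|[|[|i]]]]]] Hi] //=; rewrite ?mulr0 ?mulr1 ?mulrN1.
Qed.
Definition e2h (R : realType) : 'cV[R]_6 := mkbv 0 1 0 0 (-1) 0.
Lemma eta2E (R : realType) : eta2 R = s2 R *: e2h R.
Proof.
apply/matrixP => i j; rewrite !mxE.
by case: i => [[|[|[|[|[|[|i]]]]]] Hi] //=; rewrite ?mulr0 ?mulr1 ?mulrN1.
Qed.
Definition e3h (R : realType) : 'cV[R]_6 := mkbv 0 0 1 1 0 0.
Lemma eta3E (R : realType) : eta3 R = s2 R *: e3h R.
Proof.
apply/matrixP => i j; rewrite !mxE.
by case: i => [[|[|[|[|[|[|i]]]]]] Hi] //=; rewrite ?mulr0 ?mulr1 ?mulrN1.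
Qed.
Definition e4h (R : realType) : 'cV[R]_6 := mkbv 1 0 0 0 0 (-1).
Lemma eta4E (R : realType) : eta4 R = s2 R *: e4h R.
Proof.
apply/matrixP => i j; rewrite !mxE.
by case: i => [[|[|[|[|[|[|i]]]]]] Hi] //=; rewrite ?mulr0 ?mulr1 ?mulrN1.
Qed.
Definition e5h (R : realType) : 'cV[R]_6 := mkbv 0 1 0 0 1 0.
Lemma eta5E (R : realType) : eta5 R = s2 R *: e5h R.
Proof.
apply/matrixP => i j; rewrite !mxE.
by case: i => [[|[|[|[|[|[|i]]]]]] Hi] //=; rewrite ?mulr0 ?mulr1 ?mulrN1.
Qed.
Definition e6h (R : realType) : 'cV[R]_6 := mkbv 0 0 1 (-1) 0 0.
Lemma eta6E (R : realType) : eta6 R = s2 R *: e6h R.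
Proof.
apply/matrixP => i j; rewrite !mxE.
by case: i => [[|[|[|[|[|[|i]]]]]] Hi] //=; rewrite ?mulr0 ?mulr1 ?mulrN1.
Qed.
Lemma s22 (R : realType) : s2 R * s2 R = 1/2.
Proof. by rewrite /s2 -invfM -expr2 sqr_sqrtr // mul1r. Qed.
Lemma quadZ (R : realType) s (u v : 'cV[R]_6) B :
  ((s *: u)^T *m B *m (s *: v)) 0 0 = s * s * (u^T *m B *m v) 0 0.
Proof.
rewrite !quad mulr_sumr; apply: eq_bigr => a _; rewrite mulr_sumr; apply: eq_bigr => b _.
rewrite !mxE; ring.
Qed.

Ltac entry alE h5 h6 h7 h8 h9 hn5 hn6 A P x y z w :=
  rewrite ?eta1E ?eta2E ?eta3E ?eta4E ?eta5E ?eta6E quadZ s22 quad !sum6;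
  rewrite !mkbvE //=;
  rewrite !(mul0r, mulr0, add0r, addr0, mul1r, mulr1, mulN1r, mulrN1);
  rewrite !mxE !inordK //= /Bb /Ric /Rc /kd !big_ord_recr !big_ord0 /= /pfst /psnd /=;
  rewrite !alE //= ?dot0l ?dot0r;
  rewrite ?hn5 ?hn6 -?expr2 ?nrm2 ?dotDl ?dotDr ?dotNl ?dotNr ?dot0l ?dot0r;
  rewrite ?(dotC x A) ?(dotC y A) ?(dotC z A) ?(dotC w A) ?(dotC P A) ?(dotC y x) ?(dotC z x) ?(dotC w x) ?(dotC P x) ?(dotC z y) ?(dotC w y) ?(dotC P y) ?(dotC w z) ?(dotC P z) ?(dotC P w);
  rewrite h9 ?h5 ?h6 ?h7 ?h8;
  field; by rewrite ?pnatr_eq0.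

Lemma ep00 (R : realType) (m : nat) (c : R)
  (alpha : 'I_4 -> 'I_4 -> 'rV[R]_m) (A P x y z w : 'rV[R]_m)
  (alE : forall i j, (i < 4)%N -> (j < 4)%N -> al alpha i j = tab A P x y z w i j)
  (h5 : dot z z = dot y y)
  (h6 : dot w w = dot x x)
  (h7 : dot y w = dot x z)
  (h8 : dot z w = dot x y)
  (h9 : c = dot x x + dot y y - dot A P)
  (hn5 : nrm z = nrm y) (hn6 : nrm w = nrm x) :
  ((eta1 R)^T *m Bmat alpha c *m (eta1 R)) 0 0 = (nrm (y + z) ^+ 2 + nrm (x - w) ^+ 2).
Proof. entry alE h5 h6 h7 h8 h9 hn5 hn6 A P x y z w. Qed.
Arguments ep00 {R m c alpha A P x y z w}.

Lemma ep01 (R : realType) (m : nat) (c : R)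
  (alpha : 'I_4 -> 'I_4 -> 'rV[R]_m) (A P x y z w : 'rV[R]_m)
  (alE : forall i j, (i < 4)%N -> (j < 4)%N -> al alpha i j = tab A P x y z w i j)
  (h5 : dot z z = dot y y)
  (h6 : dot w w = dot x x)
  (h7 : dot y w = dot x z)
  (h8 : dot z w = dot x y)
  (h9 : c = dot x x + dot y y - dot A P)
  (hn5 : nrm z = nrm y) (hn6 : nrm w = nrm x) :
  ((eta1 R)^T *m Bmat alpha c *m (eta2 R)) 0 0 = (dot (z + y) (P - A)).
Proof. entry alE h5 h6 h7 h8 h9 hn5 hn6 A P x y z w. Qed.
Arguments ep01 {R m c alpha A P x y z w}.

Lemma ep02 (R : realType) (m : nat) (c : R)
  (alpha : 'I_4 -> 'I_4 -> 'rV[R]_m) (A P x y z w : 'rV[R]_m)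
  (alE : forall i j, (i < 4)%N -> (j < 4)%N -> al alpha i j = tab A P x y z w i j)
  (h5 : dot z z = dot y y)
  (h6 : dot w w = dot x x)
  (h7 : dot y w = dot x z)
  (h8 : dot z w = dot x y)
  (h9 : c = dot x x + dot y y - dot A P)
  (hn5 : nrm z = nrm y) (hn6 : nrm w = nrm x) :
  ((eta1 R)^T *m Bmat alpha c *m (eta3 R)) 0 0 = (dot (w - x) (P - A)).
Proof. entry alE h5 h6 h7 h8 h9 hn5 hn6 A P x y z w. Qed.
Arguments ep02 {R m c alpha A P x y z w}.

Lemma ep10 (R : realType) (m : nat) (c : R)
  (alpha : 'I_4 -> 'I_4 -> 'rV[R]_m) (A P x y z w : 'rV[R]_m)
  (alE : forall i j, (i < 4)%N -> (j < 4)%N -> al alpha i j = tab A P x y z w i j)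
  (h5 : dot z z = dot y y)
  (h6 : dot w w = dot x x)
  (h7 : dot y w = dot x z)
  (h8 : dot z w = dot x y)
  (h9 : c = dot x x + dot y y - dot A P)
  (hn5 : nrm z = nrm y) (hn6 : nrm w = nrm x) :
  ((eta2 R)^T *m Bmat alpha c *m (eta1 R)) 0 0 = (dot (z + y) (P - A)).
Proof. entry alE h5 h6 h7 h8 h9 hn5 hn6 A P x y z w. Qed.
Arguments ep10 {R m c alpha A P x y z w}.

Lemma ep11 (R : realType) (m : nat) (c : R)
  (alpha : 'I_4 -> 'I_4 -> 'rV[R]_m) (A P x y z w : 'rV[R]_m)
  (alE : forall i j, (i < 4)%N -> (j < 4)%N -> al alpha i j = tab A P x y z w i j)
  (h5 : dot z z = dot y y)
  (h6 : dot w w = dot x x)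
  (h7 : dot y w = dot x z)
  (h8 : dot z w = dot x y)
  (h9 : c = dot x x + dot y y - dot A P)
  (hn5 : nrm z = nrm y) (hn6 : nrm w = nrm x) :
  ((eta2 R)^T *m Bmat alpha c *m (eta2 R)) 0 0 = (nrm (A - P) ^+ 2 + 4 * nrm x ^+ 2 + 2 * (nrm y * nrm z - dot y z)).
Proof. entry alE h5 h6 h7 h8 h9 hn5 hn6 A P x y z w. Qed.
Arguments ep11 {R m c alpha A P x y z w}.

Lemma ep12 (R : realType) (m : nat) (c : R)
  (alpha : 'I_4 -> 'I_4 -> 'rV[R]_m) (A P x y z w : 'rV[R]_m)
  (alE : forall i j, (i < 4)%N -> (j < 4)%N -> al alpha i j = tab A P x y z w i j)
  (h5 : dot z z = dot y y)
  (h6 : dot w w = dot x x)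
  (h7 : dot y w = dot x z)
  (h8 : dot z w = dot x y)
  (h9 : c = dot x x + dot y y - dot A P)
  (hn5 : nrm z = nrm y) (hn6 : nrm w = nrm x) :
  ((eta2 R)^T *m Bmat alpha c *m (eta3 R)) 0 0 = 0.
Proof. entry alE h5 h6 h7 h8 h9 hn5 hn6 A P x y z w. Qed.
Arguments ep12 {R m c alpha A P x y z w}.

Lemma ep20 (R : realType) (m : nat) (c : R)
  (alpha : 'I_4 -> 'I_4 -> 'rV[R]_m) (A P x y z w : 'rV[R]_m)
  (alE : forall i j, (i < 4)%N -> (j < 4)%N -> al alpha i j = tab A P x y z w i j)
  (h5 : dot z z = dot y y)
  (h6 : dot w w = dot x x)
  (h7 : dot y w = dot x z)
  (h8 : dot z w = dot x y)
  (h9 : c = dot x x + dot y y - dot A P)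
  (hn5 : nrm z = nrm y) (hn6 : nrm w = nrm x) :
  ((eta3 R)^T *m Bmat alpha c *m (eta1 R)) 0 0 = (dot (w - x) (P - A)).
Proof. entry alE h5 h6 h7 h8 h9 hn5 hn6 A P x y z w. Qed.
Arguments ep20 {R m c alpha A P x y z w}.

Lemma ep21 (R : realType) (m : nat) (c : R)
  (alpha : 'I_4 -> 'I_4 -> 'rV[R]_m) (A P x y z w : 'rV[R]_m)
  (alE : forall i j, (i < 4)%N -> (j < 4)%N -> al alpha i j = tab A P x y z w i j)
  (h5 : dot z z = dot y y)
  (h6 : dot w w = dot x x)
  (h7 : dot y w = dot x z)
  (h8 : dot z w = dot x y)
  (h9 : c = dot x x + dot y y - dot A P)
  (hn5 : nrm z = nrm y) (hn6 : nrm w = nrm x) :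
  ((eta3 R)^T *m Bmat alpha c *m (eta2 R)) 0 0 = 0.
Proof. entry alE h5 h6 h7 h8 h9 hn5 hn6 A P x y z w. Qed.
Arguments ep21 {R m c alpha A P x y z w}.

Lemma ep22 (R : realType) (m : nat) (c : R)
  (alpha : 'I_4 -> 'I_4 -> 'rV[R]_m) (A P x y z w : 'rV[R]_m)
  (alE : forall i j, (i < 4)%N -> (j < 4)%N -> al alpha i j = tab A P x y z w i j)
  (h5 : dot z z = dot y y)
  (h6 : dot w w = dot x x)
  (h7 : dot y w = dot x z)
  (h8 : dot z w = dot x y)
  (h9 : c = dot x x + dot y y - dot A P)
  (hn5 : nrm z = nrm y) (hn6 : nrm w = nrm x) :
  ((eta3 R)^T *m Bmat alpha c *m (eta3 R)) 0 0 = (nrm (A - P) ^+ 2 + 4 * nrm y ^+ 2 + 2 * (nrm x * nrm w + dot x w)).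
Proof. entry alE h5 h6 h7 h8 h9 hn5 hn6 A P x y z w. Qed.
Arguments ep22 {R m c alpha A P x y z w}.

Lemma em00 (R : realType) (m : nat) (c : R)
  (alpha : 'I_4 -> 'I_4 -> 'rV[R]_m) (A P x y z w : 'rV[R]_m)
  (alE : forall i j, (i < 4)%N -> (j < 4)%N -> al alpha i j = tab A P x y z w i j)
  (h5 : dot z z = dot y y)
  (h6 : dot w w = dot x x)
  (h7 : dot y w = dot x z)
  (h8 : dot z w = dot x y)
  (h9 : c = dot x x + dot y y - dot A P)
  (hn5 : nrm z = nrm y) (hn6 : nrm w = nrm x) :
  ((eta4 R)^T *m Bmat alpha c *m (eta4 R)) 0 0 = (nrm (y - z) ^+ 2 + nrm (x + w) ^+ 2).
Proof. entry alE h5 h6 h7 h8 h9 hn5 hn6 A P x y z w. Qed.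
Arguments em00 {R m c alpha A P x y z w}.

Lemma em01 (R : realType) (m : nat) (c : R)
  (alpha : 'I_4 -> 'I_4 -> 'rV[R]_m) (A P x y z w : 'rV[R]_m)
  (alE : forall i j, (i < 4)%N -> (j < 4)%N -> al alpha i j = tab A P x y z w i j)
  (h5 : dot z z = dot y y)
  (h6 : dot w w = dot x x)
  (h7 : dot y w = dot x z)
  (h8 : dot z w = dot x y)
  (h9 : c = dot x x + dot y y - dot A P)
  (hn5 : nrm z = nrm y) (hn6 : nrm w = nrm x) :
  ((eta4 R)^T *m Bmat alpha c *m (eta5 R)) 0 0 = (dot (z - y) (P - A)).
Proof. entry alE h5 h6 h7 h8 h9 hn5 hn6 A P x y z w. Qed.
Arguments em01 {R m c alpha A P x y z w}.

Lemma em02 (R : realType) (m : nat) (c : R)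
  (alpha : 'I_4 -> 'I_4 -> 'rV[R]_m) (A P x y z w : 'rV[R]_m)
  (alE : forall i j, (i < 4)%N -> (j < 4)%N -> al alpha i j = tab A P x y z w i j)
  (h5 : dot z z = dot y y)
  (h6 : dot w w = dot x x)
  (h7 : dot y w = dot x z)
  (h8 : dot z w = dot x y)
  (h9 : c = dot x x + dot y y - dot A P)
  (hn5 : nrm z = nrm y) (hn6 : nrm w = nrm x) :
  ((eta4 R)^T *m Bmat alpha c *m (eta6 R)) 0 0 = (dot (w + x) (P - A)).
Proof. entry alE h5 h6 h7 h8 h9 hn5 hn6 A P x y z w. Qed.
Arguments em02 {R m c alpha A P x y z w}.

Lemma em10 (R : realType) (m : nat) (c : R)
  (alpha : 'I_4 -> 'I_4 -> 'rV[R]_m) (A P x y z w : 'rV[R]_m)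
  (alE : forall i j, (i < 4)%N -> (j < 4)%N -> al alpha i j = tab A P x y z w i j)
  (h5 : dot z z = dot y y)
  (h6 : dot w w = dot x x)
  (h7 : dot y w = dot x z)
  (h8 : dot z w = dot x y)
  (h9 : c = dot x x + dot y y - dot A P)
  (hn5 : nrm z = nrm y) (hn6 : nrm w = nrm x) :
  ((eta5 R)^T *m Bmat alpha c *m (eta4 R)) 0 0 = (dot (z - y) (P - A)).
Proof. entry alE h5 h6 h7 h8 h9 hn5 hn6 A P x y z w. Qed.
Arguments em10 {R m c alpha A P x y z w}.

Lemma em11 (R : realType) (m : nat) (c : R)
  (alpha : 'I_4 -> 'I_4 -> 'rV[R]_m) (A P x y z w : 'rV[R]_m)
  (alE : forall i j, (i < 4)%N -> (j < 4)%N -> al alpha i j = tab A P x y z w i j)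
  (h5 : dot z z = dot y y)
  (h6 : dot w w = dot x x)
  (h7 : dot y w = dot x z)
  (h8 : dot z w = dot x y)
  (h9 : c = dot x x + dot y y - dot A P)
  (hn5 : nrm z = nrm y) (hn6 : nrm w = nrm x) :
  ((eta5 R)^T *m Bmat alpha c *m (eta5 R)) 0 0 = (nrm (A - P) ^+ 2 + 4 * nrm x ^+ 2 + 2 * (nrm y * nrm z + dot y z)).
Proof. entry alE h5 h6 h7 h8 h9 hn5 hn6 A P x y z w. Qed.
Arguments em11 {R m c alpha A P x y z w}.

Lemma em12 (R : realType) (m : nat) (c : R)
  (alpha : 'I_4 -> 'I_4 -> 'rV[R]_m) (A P x y z w : 'rV[R]_m)
  (alE : forall i j, (i < 4)%N -> (j < 4)%N -> al alpha i j = tab A P x y z w i j)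
  (h5 : dot z z = dot y y)
  (h6 : dot w w = dot x x)
  (h7 : dot y w = dot x z)
  (h8 : dot z w = dot x y)
  (h9 : c = dot x x + dot y y - dot A P)
  (hn5 : nrm z = nrm y) (hn6 : nrm w = nrm x) :
  ((eta5 R)^T *m Bmat alpha c *m (eta6 R)) 0 0 = 0.
Proof. entry alE h5 h6 h7 h8 h9 hn5 hn6 A P x y z w. Qed.
Arguments em12 {R m c alpha A P x y z w}.

Lemma em20 (R : realType) (m : nat) (c : R)
  (alpha : 'I_4 -> 'I_4 -> 'rV[R]_m) (A P x y z w : 'rV[R]_m)
  (alE : forall i j, (i < 4)%N -> (j < 4)%N -> al alpha i j = tab A P x y z w i j)
  (h5 : dot z z = dot y y)
  (h6 : dot w w = dot x x)
  (h7 : dot y w = dot x z)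
  (h8 : dot z w = dot x y)
  (h9 : c = dot x x + dot y y - dot A P)
  (hn5 : nrm z = nrm y) (hn6 : nrm w = nrm x) :
  ((eta6 R)^T *m Bmat alpha c *m (eta4 R)) 0 0 = (dot (w + x) (P - A)).
Proof. entry alE h5 h6 h7 h8 h9 hn5 hn6 A P x y z w. Qed.
Arguments em20 {R m c alpha A P x y z w}.

Lemma em21 (R : realType) (m : nat) (c : R)
  (alpha : 'I_4 -> 'I_4 -> 'rV[R]_m) (A P x y z w : 'rV[R]_m)
  (alE : forall i j, (i < 4)%N -> (j < 4)%N -> al alpha i j = tab A P x y z w i j)
  (h5 : dot z z = dot y y)
  (h6 : dot w w = dot x x)
  (h7 : dot y w = dot x z)
  (h8 : dot z w = dot x y)
  (h9 : c = dot x x + dot y y - dot A P)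
  (hn5 : nrm z = nrm y) (hn6 : nrm w = nrm x) :
  ((eta6 R)^T *m Bmat alpha c *m (eta5 R)) 0 0 = 0.
Proof. entry alE h5 h6 h7 h8 h9 hn5 hn6 A P x y z w. Qed.
Arguments em21 {R m c alpha A P x y z w}.

Lemma em22 (R : realType) (m : nat) (c : R)
  (alpha : 'I_4 -> 'I_4 -> 'rV[R]_m) (A P x y z w : 'rV[R]_m)
  (alE : forall i j, (i < 4)%N -> (j < 4)%N -> al alpha i j = tab A P x y z w i j)
  (h5 : dot z z = dot y y)
  (h6 : dot w w = dot x x)
  (h7 : dot y w = dot x z)
  (h8 : dot z w = dot x y)
  (h9 : c = dot x x + dot y y - dot A P)
  (hn5 : nrm z = nrm y) (hn6 : nrm w = nrm x) :
  ((eta6 R)^T *m Bmat alpha c *m (eta6 R)) 0 0 = (nrm (A - P) ^+ 2 + 4 * nrm y ^+ 2 + 2 * (nrm x * nrm w - dot x w)).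
Proof. entry alE h5 h6 h7 h8 h9 hn5 hn6 A P x y z w. Qed.
Arguments em22 {R m c alpha A P x y z w}.

Lemma partI (R : realType) (m : nat) (c : R)
  (alpha : 'I_4 -> 'I_4 -> 'rV[R]_m) (A P x y z w : 'rV[R]_m)
  (alE : forall i j, (i < 4)%N -> (j < 4)%N -> al alpha i j = tab A P x y z w i j)
  (h5 : dot z z = dot y y)
  (h6 : dot w w = dot x x)
  (h7 : dot y w = dot x z)
  (h8 : dot z w = dot x y)
  (h9 : c = dot x x + dot y y - dot A P)
  (hn5 : nrm z = nrm y) (hn6 : nrm w = nrm x) :
  mx3 (Bmat alpha c) (eta1 R) (eta2 R) (eta3 R)
   = symmx3
       (nrm (y + z) ^+ 2 + nrm (x - w) ^+ 2)
       (nrm (A - P) ^+ 2 + 4 * nrm x ^+ 2 + 2 * (nrm y * nrm z - dot y z))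
       (nrm (A - P) ^+ 2 + 4 * nrm y ^+ 2 + 2 * (nrm x * nrm w + dot x w))
       (dot (z + y) (P - A))
       (dot (w - x) (P - A))
  /\ mx3 (Bmat alpha c) (eta4 R) (eta5 R) (eta6 R)
   = symmx3
       (nrm (y - z) ^+ 2 + nrm (x + w) ^+ 2)
       (nrm (A - P) ^+ 2 + 4 * nrm x ^+ 2 + 2 * (nrm y * nrm z + dot y z))
       (nrm (A - P) ^+ 2 + 4 * nrm y ^+ 2 + 2 * (nrm x * nrm w - dot x w))
       (dot (z - y) (P - A))
       (dot (w + x) (P - A)).
Proof.
split; apply/matrixP => k l; rewrite [LHS]mxE [RHS]mxE;
  case: k => [[|[|[|k]]] Hk] //; case: l => [[|[|[|l]]] Hl] //= ;
  first [ exact: (ep00 alE h5 h6 h7 h8 h9 hn5 hn6) | exact: (ep01 alE h5 h6 h7 h8 h9 hn5 hn6) | exact: (ep02 alE h5 h6 h7 h8 h9 hn5 hn6) | exact: (ep10 alE h5 h6 h7 h8 h9 hn5 hn6) | exact: (ep11 alE h5 h6 h7 h8 h9 hn5 hn6) | exact: (ep12 alE h5 h6 h7 h8 h9 hn5 hn6)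
        | exact: (ep20 alE h5 h6 h7 h8 h9 hn5 hn6) | exact: (ep21 alE h5 h6 h7 h8 h9 hn5 hn6) | exact: (ep22 alE h5 h6 h7 h8 h9 hn5 hn6)
        | exact: (em00 alE h5 h6 h7 h8 h9 hn5 hn6) | exact: (em01 alE h5 h6 h7 h8 h9 hn5 hn6) | exact: (em02 alE h5 h6 h7 h8 h9 hn5 hn6) | exact: (em10 alE h5 h6 h7 h8 h9 hn5 hn6) | exact: (em11 alE h5 h6 h7 h8 h9 hn5 hn6) | exact: (em12 alE h5 h6 h7 h8 h9 hn5 hn6)
        | exact: (em20 alE h5 h6 h7 h8 h9 hn5 hn6) | exact: (em21 alE h5 h6 h7 h8 h9 hn5 hn6) | exact: (em22 alE h5 h6 h7 h8 h9 hn5 hn6) ].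
Qed.

Lemma solveD (R : realType) m (s t : R) (u D : 'rV[R]_m) :
  t != 0 -> s *: u + t *: D = 0 -> D = (- (s / t)) *: u.
Proof.
move=> tn0 /eqP; rewrite addr_eq0 => /eqP H.
apply/rowP => k; have := congr1 (fun v : 'rV_m => v 0 k) H; rewrite !mxE => Hk.
have Hk' : t * D 0 k = - (s * u 0 k) by rewrite Hk opprK.
by apply: (mulfI tn0); rewrite Hk'; field.
Qed.
Arguments solveD {R m s t u D}.
Lemma scale2 (R : realType) m (a : R) (y : 'rV[R]_m) : a *: (y + y) = (2 * a) *: y.
Proof. by rewrite mulr_natl mulr2n scalerDl scalerDr. Qed.
Lemma dot_eq0P (R : realType) m (u : 'rV[R]_m) : (dot u u == 0) = (u == 0).
Proof. by apply/eqP/eqP => [/dot_eq0 //|->]; rewrite dot0l. Qed.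
Lemma subr_eq0' (R : realType) m (u v : 'rV[R]_m) : u - v = 0 -> u = v.
Proof. by move/eqP; rewrite subr_eq0 => /eqP. Qed.
Lemma addr_eq0' (R : realType) m (u v : 'rV[R]_m) : u + v = 0 -> u = - v.
Proof. by move/eqP; rewrite addr_eq0 => /eqP. Qed.

Lemma alg_plus (R : realType) m (A P x y z w : 'rV[R]_m) (t1 t2 t3 : R)
  (h5 : dot z z = dot y y) (h6 : dot w w = dot x x)
  (hn5 : nrm z = nrm y) (hn6 : nrm w = nrm x) :
  (t1 != 0) || (t2 != 0) || (t3 != 0) ->
  (nrm (y + z) ^+ 2 + nrm (x - w) ^+ 2) * t1 + dot (z + y) (P - A) * t2
     + dot (w - x) (P - A) * t3 = 0 ->
  dot (z + y) (P - A) * t1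
    + (nrm (A - P) ^+ 2 + 4 * nrm x ^+ 2 + 2 * (nrm y * nrm z - dot y z)) * t2 = 0 ->
  dot (w - x) (P - A) * t1
    + (nrm (A - P) ^+ 2 + 4 * nrm y ^+ 2 + 2 * (nrm x * nrm w + dot x w)) * t3 = 0 ->
  (y + z = 0 /\ x - w = 0 /\ dot (z + y) (P - A) = 0 /\ dot (w - x) (P - A) = 0)
  \/ (x = 0 /\ w = 0 /\ z = y /\ y != 0 /\ exists rho : R, P - A = (2 * rho) *: y)
  \/ (y = 0 /\ z = 0 /\ w = - x /\ x != 0 /\ exists rho : R, P - A = (2 * rho) *: x).
Proof.
have -> : nrm (A - P) ^+ 2 = dot (P - A) (P - A) by rewrite nrm2 -opprB dotNl dotNr opprK.
move: (P - A) => D nz e1 e2 e3.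
have Q : dot (t1 *: (y + z) + t2 *: D) (t1 *: (y + z) + t2 *: D)
  + dot (t1 *: (x - w) - t3 *: D) (t1 *: (x - w) - t3 *: D)
  + (4 * dot x x + dot (y - z) (y - z)) * t2 ^+ 2
  + (4 * dot y y + dot (x + w) (x + w)) * t3 ^+ 2 = 0.
  transitivity (t1 * ((nrm (y + z) ^+ 2 + nrm (x - w) ^+ 2) * t1 + dot (z + y) D * t2
     + dot (w - x) D * t3) + t2 * (dot (z + y) D * t1
    + (dot D D + 4 * nrm x ^+ 2 + 2 * (nrm y * nrm z - dot y z)) * t2) +
    t3 * (dot (w - x) D * t1
    + (dot D D + 4 * nrm y ^+ 2 + 2 * (nrm x * nrm w + dot x w)) * t3)); last first.
    by rewrite e1 e2 e3; ring.
  rewrite hn5 hn6 -!expr2 !nrm2 !(dotDl, dotDr, dotNl, dotNr, dotZl, dotZr).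
  rewrite ?(dotC y x) ?(dotC z x) ?(dotC w x) ?(dotC D x) ?(dotC z y) ?(dotC w y) ?(dotC D y)
     ?(dotC w z) ?(dotC D z) ?(dotC D w) h5 h6.
  ring.
have g1 := dot_ge0 (t1 *: (y + z) + t2 *: D).
have g2 := dot_ge0 (t1 *: (x - w) - t3 *: D).
have gx := dot_ge0 x; have gy := dot_ge0 y.
have gq := dot_ge0 (y - z); have gr := dot_ge0 (x + w).
have g3 : 0 <= (4 * dot x x + dot (y - z) (y - z)) * t2 ^+ 2.
  by apply: mulr_ge0; [lra | exact: sqr_ge0].
have g4 : 0 <= (4 * dot y y + dot (x + w) (x + w)) * t3 ^+ 2.
  by apply: mulr_ge0; [lra | exact: sqr_ge0].
have Z1 : dot (t1 *: (y + z) + t2 *: D) (t1 *: (y + z) + t2 *: D) = 0 by lra.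
have Z2 : dot (t1 *: (x - w) - t3 *: D) (t1 *: (x - w) - t3 *: D) = 0 by lra.
have Z3 : (4 * dot x x + dot (y - z) (y - z)) * t2 ^+ 2 = 0 by lra.
have Z4 : (4 * dot y y + dot (x + w) (x + w)) * t3 ^+ 2 = 0 by lra.
move/dot_eq0: Z1 => Z1; move/dot_eq0: Z2 => Z2.
have [t2n0|/negPn/eqP t20] := boolP (t2 != 0).
  move/eqP: Z3; rewrite mulf_eq0 expf_eq0 (negbTE t2n0) andbF orbF => /eqP Z3.
  have x0 : x = 0 by apply: dot_eq0; lra.
  have yz : y = z by apply: subr_eq0'; apply: dot_eq0; lra.
  have w0 : w = 0 by apply: dot_eq0; rewrite h6 x0 dot0l.
  rewrite -yz in Z1 *.
  have [y0|yn0] := eqVneq y 0.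
    left; rewrite x0 w0 y0 !addr0 subr0 !dot0l; by [].
  right; left; do 4! (split => //).
  exists (- (t1 / t2)); rewrite -scale2; exact: solveD t2n0 Z1.
have [t3n0|/negPn/eqP t30] := boolP (t3 != 0).
  move/eqP: Z4; rewrite mulf_eq0 expf_eq0 (negbTE t3n0) andbF orbF => /eqP Z4.
  have y0 : y = 0 by apply: dot_eq0; lra.
  have wx : w = - x by apply: addr_eq0'; rewrite addrC; apply: dot_eq0; lra.
  have z0 : z = 0 by apply: dot_eq0; rewrite h5 y0 dot0l.
  have [x0|xn0] := eqVneq x 0.
    left; rewrite y0 z0 wx x0 oppr0 !addr0 subr0 !dot0l; by [].
  right; right; do 4! (split => //).
  exists (t1 / t3); move: Z2; rewrite wx opprK -scaleNr => Z2.
  by rewrite -scale2 (solveD _ Z2) ?oppr_eq0 // divrN opprK.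
move: nz; rewrite t20 t30 eqxx !orbF => t1n0.
move: Z1 Z2; rewrite t20 t30 !scale0r !addr0 subr0 => /eqP Z1 /eqP Z2.
move: Z1 Z2; rewrite !scaler_eq0 (negbTE t1n0) /= => /eqP Z1 /eqP Z2.
left; rewrite Z1 Z2 (addrC z) Z1 -opprB Z2 oppr0 !dot0l; by [].
Qed.

Lemma alg_minus (R : realType) m (A P x y z w : 'rV[R]_m) (t1 t2 t3 : R)
  (h5 : dot z z = dot y y) (h6 : dot w w = dot x x)
  (hn5 : nrm z = nrm y) (hn6 : nrm w = nrm x) :
  (t1 != 0) || (t2 != 0) || (t3 != 0) ->
  (nrm (y - z) ^+ 2 + nrm (x + w) ^+ 2) * t1 + dot (z - y) (P - A) * t2
     + dot (w + x) (P - A) * t3 = 0 ->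
  dot (z - y) (P - A) * t1
    + (nrm (A - P) ^+ 2 + 4 * nrm x ^+ 2 + 2 * (nrm y * nrm z + dot y z)) * t2 = 0 ->
  dot (w + x) (P - A) * t1
    + (nrm (A - P) ^+ 2 + 4 * nrm y ^+ 2 + 2 * (nrm x * nrm w - dot x w)) * t3 = 0 ->
  (y - z = 0 /\ x + w = 0 /\ dot (z - y) (P - A) = 0 /\ dot (w + x) (P - A) = 0)
  \/ (x = 0 /\ w = 0 /\ z = - y /\ y != 0 /\ exists rho : R, P - A = (2 * rho) *: y)
  \/ (y = 0 /\ z = 0 /\ w = x /\ x != 0 /\ exists rho : R, P - A = (2 * rho) *: x).
Proof.
have -> : nrm (A - P) ^+ 2 = dot (P - A) (P - A) by rewrite nrm2 -opprB dotNl dotNr opprK.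
move: (P - A) => D nz e1 e2 e3.
have Q : dot (t1 *: (z - y) + t2 *: D) (t1 *: (z - y) + t2 *: D)
  + dot (t1 *: (w + x) + t3 *: D) (t1 *: (w + x) + t3 *: D)
  + (4 * dot x x + dot (y + z) (y + z)) * t2 ^+ 2
  + (4 * dot y y + dot (x - w) (x - w)) * t3 ^+ 2 = 0.
  transitivity (t1 * ((nrm (y - z) ^+ 2 + nrm (x + w) ^+ 2) * t1 + dot (z - y) D * t2
     + dot (w + x) D * t3) + t2 * (dot (z - y) D * t1
    + (dot D D + 4 * nrm x ^+ 2 + 2 * (nrm y * nrm z + dot y z)) * t2) +
    t3 * (dot (w + x) D * t1
    + (dot D D + 4 * nrm y ^+ 2 + 2 * (nrm x * nrm w - dot x w)) * t3)); last first.
    by rewrite e1 e2 e3; ring.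
  rewrite hn5 hn6 -!expr2 !nrm2 !(dotDl, dotDr, dotNl, dotNr, dotZl, dotZr).
  rewrite ?(dotC y x) ?(dotC z x) ?(dotC w x) ?(dotC D x) ?(dotC z y) ?(dotC w y) ?(dotC D y)
     ?(dotC w z) ?(dotC D z) ?(dotC D w) h5 h6.
  ring.
have g1 := dot_ge0 (t1 *: (z - y) + t2 *: D).
have g2 := dot_ge0 (t1 *: (w + x) + t3 *: D).
have gx := dot_ge0 x; have gy := dot_ge0 y.
have gq := dot_ge0 (y + z); have gr := dot_ge0 (x - w).
have g3 : 0 <= (4 * dot x x + dot (y + z) (y + z)) * t2 ^+ 2.
  by apply: mulr_ge0; [lra | exact: sqr_ge0].
have g4 : 0 <= (4 * dot y y + dot (x - w) (x - w)) * t3 ^+ 2.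
  by apply: mulr_ge0; [lra | exact: sqr_ge0].
have Z1 : dot (t1 *: (z - y) + t2 *: D) (t1 *: (z - y) + t2 *: D) = 0 by lra.
have Z2 : dot (t1 *: (w + x) + t3 *: D) (t1 *: (w + x) + t3 *: D) = 0 by lra.
have Z3 : (4 * dot x x + dot (y + z) (y + z)) * t2 ^+ 2 = 0 by lra.
have Z4 : (4 * dot y y + dot (x - w) (x - w)) * t3 ^+ 2 = 0 by lra.
move/dot_eq0: Z1 => Z1; move/dot_eq0: Z2 => Z2.
have [t2n0|/negPn/eqP t20] := boolP (t2 != 0).
  move/eqP: Z3; rewrite mulf_eq0 expf_eq0 (negbTE t2n0) andbF orbF => /eqP Z3.
  have x0 : x = 0 by apply: dot_eq0; lra.
  have yz : z = - y by apply: addr_eq0'; rewrite addrC; apply: dot_eq0; lra.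
  have w0 : w = 0 by apply: dot_eq0; rewrite h6 x0 dot0l.
  rewrite yz in Z1 *.
  have [y0|yn0] := eqVneq y 0.
    left; rewrite x0 w0 y0 oppr0 !addr0 subr0 !dot0l; by [].
  right; left; do 4! (split => //).
  exists (t1 / t2); rewrite (solveD t2n0 Z1) -scale2 -opprD scalerN -scaleNr opprK.
  by [].
have [t3n0|/negPn/eqP t30] := boolP (t3 != 0).
  move/eqP: Z4; rewrite mulf_eq0 expf_eq0 (negbTE t3n0) andbF orbF => /eqP Z4.
  have y0 : y = 0 by apply: dot_eq0; lra.
  have wx : w = x by apply/esym/subr_eq0'; apply: dot_eq0; lra.
  have z0 : z = 0 by apply: dot_eq0; rewrite h5 y0 dot0l.
  have [x0|xn0] := eqVneq x 0.
    left; rewrite y0 z0 wx x0 !addr0 subr0 !dot0l; by [].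
  right; right; do 4! (split => //).
  exists (- (t1 / t3)); move: Z2; rewrite wx => Z2.
  by rewrite -scale2 (solveD t3n0 Z2).
move: nz; rewrite t20 t30 eqxx !orbF => t1n0.
move: Z1 Z2; rewrite t20 t30 !scale0r !addr0 => /eqP Z1 /eqP Z2.
move: Z1 Z2; rewrite !scaler_eq0 (negbTE t1n0) /= => /eqP Z1 /eqP Z2.
left; rewrite Z1 (addrC x) Z2 -opprB Z1 oppr0 !dot0l; by [].
Qed.

Lemma mx3E (R : nzRingType) (B : 'M[R]_6) v1 v2 v3 i j :
  (mx3 B v1 v2 v3) i j = ((nth v1 [:: v1; v2; v3] i)^T *m B *m (nth v1 [:: v1; v2; v3] j)) 0 0.
Proof. by rewrite mxE. Qed.
Lemma symmx3E (R : nzRingType) (mu1 mu2 mu3 a1 a2 : R) i j :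
  (symmx3 mu1 mu2 mu3 a1 a2) i j =
   nth 0 (nth [::] [:: [:: mu1; a1; a2]; [:: a1; mu2; 0]; [:: a2; 0; mu3]] i) j.
Proof. by rewrite mxE. Qed.
Lemma mkbv0 (R : nzRingType) : mkbv 0 0 0 0 0 0 = 0 :> 'cV[R]_6.
Proof.
by apply/matrixP => i j; rewrite !mxE; case: i => [[|[|[|[|[|[|i]]]]]] Hi].
Qed.

Lemma lin (R : comNzRingType) (L t Y s e X0 X5 : R) :
  L + t * Y = s * s * (X0 + e * X5) -> Y = 0 -> X0 = 0 -> X5 = 0 -> L = 0.
Proof.
move=> H Y0 H0 H5.
have -> : L = s * s * (X0 + e * X5) - t * Y by rewrite -H; ring.
by rewrite Y0 H0 H5; ring.
Qed.
Arguments lin {R L} t Y {s} e {X0 X5}.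

Definition s6 (R : nzRingType) (g : nat -> R) := g 0%N + g 1%N + g 2%N + g 3%N + g 4%N + g 5%N.
Arguments s6 {R} g.
Lemma quadE (R : realType) (B : 'M[R]_6) (f : nat -> nat -> R)
  (hf : forall a b, f a b = B (inord a) (inord b)) (u v : 'cV[R]_6) :
  (u^T *m B *m v) 0 0 = s6 (fun a => s6 (fun b => u (inord a) 0 * f a b * v (inord b) 0)).
Proof. by rewrite quad !sum6 /s6 !hf. Qed.
Lemma mulE (R : realType) (B : 'M[R]_6) (f : nat -> nat -> R)
  (hf : forall a b, f a b = B (inord a) (inord b)) (w : 'cV[R]_6) k :
  (B *m w) (inord k) 0 = s6 (fun b => f k b * w (inord b) 0).
Proof. by rewrite mxE sum6 /s6 !hf. Qed.
Arguments quadE {R B f} hf u v.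
Arguments mulE {R B f} hf w k.

Lemma ker_plus (R : realType) (B : 'M[R]_6) mu1 mu2 mu3 a1 a2 :
  mx3 B (eta1 R) (eta2 R) (eta3 R) = symmx3 mu1 mu2 mu3 a1 a2 -> ker_plus_nz B ->
  exists t1 t2 t3 : R, [/\ (t1 != 0) || (t2 != 0) || (t3 != 0),
    mu1 * t1 + a1 * t2 + a2 * t3 = 0, a1 * t1 + mu2 * t2 = 0 & a2 * t1 + mu3 * t3 = 0].
Proof.
move=> HM [w [wn0 [hw Bw]]].
have wE : w = mkbv (bc w 0) (bc w 1) (bc w 2) (bc w 2) (- bc w 1) (bc w 0).
  have E k : (k < 6)%N -> w (inord k) 0 = (hodge w) (inord k) 0 by rewrite hw.
  apply/matrixP => i j; rewrite (ord1 j) -(inord_val i) mkbvE //.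
  by case: i => [[|[|[|[|[|[|i]]]]]] Hi] //=; rewrite E // mkbvE.
move: (bc w 0) (bc w 1) (bc w 2) wE => t1 t2 t3 wE; subst w.
exists t1, t2, t3.
have [f hf] : exists f : nat -> nat -> R, forall a b, f a b = B (inord a) (inord b)
  by exists (fun a b => B (inord a) (inord b)).
have Q k : (k < 6)%N -> s6 (fun b => f k b * (mkbv t1 t2 t3 t3 (- t2) t1) (inord b) 0) = 0.
  move=> hk; rewrite -(mulE hf) Bw mxE; by [].
have Q0 := Q 0%N isT; have Q1 := Q 1%N isT; have Q2 := Q 2%N isT;
have Q3 := Q 3%N isT; have Q4 := Q 4%N isT; have Q5 := Q 5%N isT.
rewrite /s6 !mkbvE //= in Q0 Q1 Q2 Q3 Q4 Q5.
have H00 := congr1 (fun M : 'M[R]_3 => M (inord 0) (inord 0)) HM.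
have H01 := congr1 (fun M : 'M[R]_3 => M (inord 0) (inord 1)) HM.
have H02 := congr1 (fun M : 'M[R]_3 => M (inord 0) (inord 2)) HM.
have H10 := congr1 (fun M : 'M[R]_3 => M (inord 1) (inord 0)) HM.
have H11 := congr1 (fun M : 'M[R]_3 => M (inord 1) (inord 1)) HM.
have H12 := congr1 (fun M : 'M[R]_3 => M (inord 1) (inord 2)) HM.
have H20 := congr1 (fun M : 'M[R]_3 => M (inord 2) (inord 0)) HM.
have H21 := congr1 (fun M : 'M[R]_3 => M (inord 2) (inord 1)) HM.
have H22 := congr1 (fun M : 'M[R]_3 => M (inord 2) (inord 2)) HM.
rewrite /= !mx3E !symmx3E !inordK //= in H00 H01 H02 H10 H11 H12 H20 H21 H22.
rewrite /eta1 /eta2 /eta3 !(quadE hf) /s6 !mkbvE //= in H00 H01 H02 H10 H11 H12 H20 H21 H22.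
split.
- apply: contraT; rewrite !negb_or !negbK => /andP [/andP [/eqP e0 /eqP e1] /eqP e2].
  by move: wn0; rewrite e0 e1 e2 oppr0 mkbv0 eqxx.
- rewrite -H00 -H01 -H02.
  by apply: (lin (s := s2 R) 0 0 1 _ erefl Q0 Q5); ring.
- rewrite -H10 -H11.
  by apply: (lin (s := s2 R) t3 _ (-1) _ H12 Q1 Q4); ring.
- rewrite -H20 -H22.
  by apply: (lin (s := s2 R) t2 _ 1 _ H21 Q2 Q3); ring.
Qed.


Lemma ker_minus (R : realType) (B : 'M[R]_6) mu1 mu2 mu3 a1 a2 :
  mx3 B (eta4 R) (eta5 R) (eta6 R) = symmx3 mu1 mu2 mu3 a1 a2 -> ker_minus_nz B ->
  exists t1 t2 t3 : R, [/\ (t1 != 0) || (t2 != 0) || (t3 != 0),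
    mu1 * t1 + a1 * t2 + a2 * t3 = 0, a1 * t1 + mu2 * t2 = 0 & a2 * t1 + mu3 * t3 = 0].
Proof.
move=> HM [w [wn0 [hw Bw]]].
have wE : w = mkbv (bc w 0) (bc w 1) (bc w 2) (- bc w 2) (bc w 1) (- bc w 0).
  have E k : (k < 6)%N -> w (inord k) 0 = - (hodge w) (inord k) 0 by rewrite hw mxE opprK.
  apply/matrixP => i j; rewrite (ord1 j) -(inord_val i) mkbvE //.
  by case: i => [[|[|[|[|[|[|i]]]]]] Hi] //=; rewrite E // mkbvE //= ?opprK.
move: (bc w 0) (bc w 1) (bc w 2) wE => t1 t2 t3 wE; subst w.
exists t1, t2, t3.
have [f hf] : exists f : nat -> nat -> R, forall a b, f a b = B (inord a) (inord b)
  by exists (fun a b => B (inord a) (inord b)).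
have Q k : (k < 6)%N -> s6 (fun b => f k b * (mkbv t1 t2 t3 (- t3) t2 (- t1)) (inord b) 0) = 0.
  move=> hk; rewrite -(mulE hf) Bw mxE; by [].
have Q0 := Q 0%N isT; have Q1 := Q 1%N isT; have Q2 := Q 2%N isT;
have Q3 := Q 3%N isT; have Q4 := Q 4%N isT; have Q5 := Q 5%N isT.
rewrite /s6 !mkbvE //= in Q0 Q1 Q2 Q3 Q4 Q5.
have H00 := congr1 (fun M : 'M[R]_3 => M (inord 0) (inord 0)) HM.
have H01 := congr1 (fun M : 'M[R]_3 => M (inord 0) (inord 1)) HM.
have H02 := congr1 (fun M : 'M[R]_3 => M (inord 0) (inord 2)) HM.
have H10 := congr1 (fun M : 'M[R]_3 => M (inord 1) (inord 0)) HM.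
have H11 := congr1 (fun M : 'M[R]_3 => M (inord 1) (inord 1)) HM.
have H12 := congr1 (fun M : 'M[R]_3 => M (inord 1) (inord 2)) HM.
have H20 := congr1 (fun M : 'M[R]_3 => M (inord 2) (inord 0)) HM.
have H21 := congr1 (fun M : 'M[R]_3 => M (inord 2) (inord 1)) HM.
have H22 := congr1 (fun M : 'M[R]_3 => M (inord 2) (inord 2)) HM.
rewrite /= !mx3E !symmx3E !inordK //= in H00 H01 H02 H10 H11 H12 H20 H21 H22.
rewrite /eta4 /eta5 /eta6 !(quadE hf) /s6 !mkbvE //= in H00 H01 H02 H10 H11 H12 H20 H21 H22.
split.
- apply: contraT; rewrite !negb_or !negbK => /andP [/andP [/eqP e0 /eqP e1] /eqP e2].
  by move: wn0; rewrite e0 e1 e2 !oppr0 mkbv0 eqxx.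
- rewrite -H00 -H01 -H02.
  by apply: (lin (s := s2 R) 0 0 (-1) _ erefl Q0 Q5); ring.
- rewrite -H10 -H11.
  by apply: (lin (s := s2 R) t3 _ 1 _ H12 Q1 Q4); ring.
- rewrite -H20 -H22.
  by apply: (lin (s := s2 R) t2 _ (-1) _ H21 Q2 Q3); ring.
Qed.


Lemma flat_gen (R : realType) m (alpha : 'I_4 -> 'I_4 -> 'rV[R]_m) (A v : 'rV[R]_m)
  (c ex ey ez ew : R)
  (alE : forall i j, (i < 4)%N -> (j < 4)%N -> al alpha i j =
     tab A (A + c *: v) (ex *: v) (ey *: v) (ez *: v) (ew *: v) i j) :
  normally_flat alpha.
Proof.
move=> i j xi; rewrite /Rperp !big_ord_recr big_ord0 /= add0r.
case: i => [[|[|[|[|i]]]] Hi] //; case: j => [[|[|[|[|j]]]] Hj] //=;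
  rewrite !alE //= ?(dotDl, dotZl, dot0l); apply/rowP => l; rewrite !mxE; ring.
Qed.

Lemma rank_ge1 (R : realType) m (alpha : 'I_4 -> 'I_4 -> 'rV[R]_m) (k : 'I_16) :
  al alpha (k %/ 4) (k %% 4) != 0 -> (0 < dimN1 alpha)%N.
Proof.
move=> H; rewrite lt0n mxrank_eq0; apply: contra H => /eqP H0.
apply/eqP/rowP => j; have := congr1 (fun M : 'M[R]_(16, m) => M k j) H0.
by rewrite !mxE.
Qed.

Lemma rank_le2 (R : realType) m (alpha : 'I_4 -> 'I_4 -> 'rV[R]_m) (A v : 'rV[R]_m)
  (a b : nat -> nat -> R)
  (alE : forall i j, (i < 4)%N -> (j < 4)%N -> al alpha i j = a i j *: A + b i j *: v) :
  (dimN1 alpha <= 2)%N.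
Proof.
rewrite /dimN1.
have -> : N1mx alpha = (\matrix_(k < 16, t < 2) (if t == 0 :> nat then a (k %/ 4)%N (k %% 4)%N
      else b (k %/ 4)%N (k %% 4)%N)) *m
   (\matrix_(t < 2, j < m) (if t == 0 :> nat then A 0 j else v 0 j)).
  apply/matrixP => k j; rewrite !mxE !big_ord_recr big_ord0 /= !mxE /= add0r.
  rewrite alE ?mxE //.
    by rewrite ltn_divLR.
  by rewrite ltn_mod.
apply: leq_trans (mxrankM_maxr _ _) _.
exact: rank_leq_row.
Qed.

Lemma moreover_gen (R : realType) m (alpha : 'I_4 -> 'I_4 -> 'rV[R]_m) (A v : 'rV[R]_m)
  (c ex ey ez ew : R) (k : 'I_16)
  (alE : forall i j, (i < 4)%N -> (j < 4)%N -> al alpha i j =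
     tab A (A + c *: v) (ex *: v) (ey *: v) (ez *: v) (ew *: v) i j) :
  al alpha (k %/ 4) (k %% 4) != 0 ->
  normally_flat alpha /\ (1 <= dimN1 alpha <= 2)%N.
Proof.
move=> nz; split; first exact: (flat_gen _ _ _ _ _ _ _ _ _ _ alE).
rewrite (rank_ge1 _ _ _ _ nz) /=.
apply: (rank_le2 _ _ _ A v (tabR 1 1 0 0 0 0) (tabR 0 c ex ey ez ew)).
move=> i j hi hj; rewrite alE //.
case: i hi => [|[|[|[|i]]]] // _; case: j hj => [|[|[|[|j]]]] // _ /=;
  by rewrite ?scale0r ?scale1r ?add0r ?addr0.
Qed.

Arguments ker_plus {R B mu1 mu2 mu3 a1 a2}.
Arguments ker_minus {R B mu1 mu2 mu3 a1 a2}.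
Arguments alg_plus {R m A P x y z w t1 t2 t3}.
Arguments alg_minus {R m A P x y z w t1 t2 t3}.
Arguments partI {R m c alpha A P x y z w}.
Arguments moreover_gen {R m alpha A v} c ex ey ez ew k.

Theorem lemma3p3 (R : realType) (m : nat) (c : R)
  (alpha : 'I_4 -> 'I_4 -> 'rV[R]_m)
  (hc : c = 0 \/ c = 1)
  (hsym : forall i j : 'I_4, alpha i j = alpha j i)
  (h1 : al alpha 0 0 = al alpha 1 1)
  (h2 : al alpha 2 2 = al alpha 3 3)
  (h3 : al alpha 0 1 = 0)
  (h4 : al alpha 2 3 = 0)
  (h5 : nrm (al alpha 1 2) = nrm (al alpha 0 3))
  (h6 : nrm (al alpha 1 3) = nrm (al alpha 0 2))
  (h7 : dot (al alpha 0 3 + al alpha 1 2) (al alpha 0 2 - al alpha 1 3) = 0)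
  (h8 : dot (al alpha 0 2 + al alpha 1 3) (al alpha 0 3 - al alpha 1 2) = 0)
  (h9 : nrm (al alpha 0 2) ^+ 2 + nrm (al alpha 0 3) ^+ 2
        = c + dot (al alpha 0 0) (al alpha 3 3)) :
  let a := al alpha in
  let D := a 3%N 3%N - a 0%N 0%N in
  let B := Bmat alpha c in
  (* (i) *)
  (mx3 B (eta1 R) (eta2 R) (eta3 R)
   = symmx3
       (nrm (a 0%N 3%N + a 1%N 2%N) ^+ 2 + nrm (a 0%N 2%N - a 1%N 3%N) ^+ 2)
       (nrm (a 0%N 0%N - a 3%N 3%N) ^+ 2 + 4 * nrm (a 0%N 2%N) ^+ 2
          + 2 * (nrm (a 0%N 3%N) * nrm (a 1%N 2%N) - dot (a 0%N 3%N) (a 1%N 2%N)))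
       (nrm (a 0%N 0%N - a 3%N 3%N) ^+ 2 + 4 * nrm (a 0%N 3%N) ^+ 2
          + 2 * (nrm (a 0%N 2%N) * nrm (a 1%N 3%N) + dot (a 0%N 2%N) (a 1%N 3%N)))
       (dot (a 1%N 2%N + a 0%N 3%N) D)
       (dot (a 1%N 3%N - a 0%N 2%N) D)
  /\ mx3 B (eta4 R) (eta5 R) (eta6 R)
   = symmx3
       (nrm (a 0%N 3%N - a 1%N 2%N) ^+ 2 + nrm (a 0%N 2%N + a 1%N 3%N) ^+ 2)
       (nrm (a 0%N 0%N - a 3%N 3%N) ^+ 2 + 4 * nrm (a 0%N 2%N) ^+ 2
          + 2 * (nrm (a 0%N 3%N) * nrm (a 1%N 2%N) + dot (a 0%N 3%N) (a 1%N 2%N)))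
       (nrm (a 0%N 0%N - a 3%N 3%N) ^+ 2 + 4 * nrm (a 0%N 3%N) ^+ 2
          + 2 * (nrm (a 0%N 2%N) * nrm (a 1%N 3%N) - dot (a 0%N 2%N) (a 1%N 3%N)))
       (dot (a 1%N 2%N - a 0%N 3%N) D)
       (dot (a 1%N 3%N + a 0%N 2%N) D))
  (* (ii) *)
  /\ (ker_plus_nz B ->
       (a 0%N 3%N + a 1%N 2%N = 0 /\ a 0%N 2%N - a 1%N 3%N = 0
          /\ dot (a 1%N 2%N + a 0%N 3%N) D = 0 /\ dot (a 1%N 3%N - a 0%N 2%N) D = 0)
    \/ (a 0%N 2%N = 0 /\ a 1%N 3%N = 0 /\ a 1%N 2%N = a 0%N 3%N /\ a 0%N 3%N != 0
          /\ exists rho : R, D = (2 * rho) *: a 0%N 3%N)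
    \/ (a 0%N 3%N = 0 /\ a 1%N 2%N = 0 /\ a 1%N 3%N = - a 0%N 2%N /\ a 0%N 2%N != 0
          /\ exists rho : R, D = (2 * rho) *: a 0%N 2%N))
  (* (iii) *)
  /\ (ker_minus_nz B ->
       (a 0%N 3%N - a 1%N 2%N = 0 /\ a 0%N 2%N + a 1%N 3%N = 0
          /\ dot (a 1%N 2%N - a 0%N 3%N) D = 0 /\ dot (a 1%N 3%N + a 0%N 2%N) D = 0)
    \/ (a 0%N 2%N = 0 /\ a 1%N 3%N = 0 /\ a 1%N 2%N = - a 0%N 3%N /\ a 0%N 3%N != 0
          /\ exists rho : R, D = (2 * rho) *: a 0%N 3%N)
    \/ (a 0%N 3%N = 0 /\ a 1%N 2%N = 0 /\ a 1%N 3%N = a 0%N 2%N /\ a 0%N 2%N != 0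
          /\ exists rho : R, D = (2 * rho) *: a 0%N 2%N))
  (* moreover: in cases (ii2),(ii3),(iii2),(iii3) *)
  /\ (((a 0%N 2%N = 0 /\ a 1%N 3%N = 0 /\ a 1%N 2%N = a 0%N 3%N /\ a 0%N 3%N != 0
          /\ exists rho : R, D = (2 * rho) *: a 0%N 3%N)
       \/ (a 0%N 3%N = 0 /\ a 1%N 2%N = 0 /\ a 1%N 3%N = - a 0%N 2%N /\ a 0%N 2%N != 0
          /\ exists rho : R, D = (2 * rho) *: a 0%N 2%N)
       \/ (a 0%N 2%N = 0 /\ a 1%N 3%N = 0 /\ a 1%N 2%N = - a 0%N 3%N /\ a 0%N 3%N != 0
          /\ exists rho : R, D = (2 * rho) *: a 0%N 3%N)
       \/ (a 0%N 3%N = 0 /\ a 1%N 2%N = 0 /\ a 1%N 3%N = a 0%N 2%N /\ a 0%N 2%N != 0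
          /\ exists rho : R, D = (2 * rho) *: a 0%N 2%N))
      -> normally_flat alpha /\ (1 <= dimN1 alpha <= 2)%N).
Proof.
cbv zeta.
have {h1}h1 : al alpha 0%N 0%N = al alpha 1%N 1%N := h1.
have {h2}h2 : al alpha 2%N 2%N = al alpha 3%N 3%N := h2.
have {h3}h3 : al alpha 0%N 1%N = 0 := h3.
have {h4}h4 : al alpha 2%N 3%N = 0 := h4.
have {h5}hn5 : nrm (al alpha 1%N 2%N) = nrm (al alpha 0%N 3%N) := h5.
have {h6}hn6 : nrm (al alpha 1%N 3%N) = nrm (al alpha 0%N 2%N) := h6.
have {h7}h7 : dot (al alpha 0%N 3%N + al alpha 1%N 2%N) (al alpha 0%N 2%N - al alpha 1%N 3%N) = 0 := h7.
have {h8}h8 : dot (al alpha 0%N 2%N + al alpha 1%N 3%N) (al alpha 0%N 3%N - al alpha 1%N 2%N) = 0 := h8.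
have {h9}h9 : nrm (al alpha 0%N 2%N) ^+ 2 + nrm (al alpha 0%N 3%N) ^+ 2
        = c + dot (al alpha 0%N 0%N) (al alpha 3%N 3%N) := h9.
set A := al alpha 0%N 0%N; set P := al alpha 3%N 3%N;
set x := al alpha 0%N 2%N; set y := al alpha 0%N 3%N;
set z := al alpha 1%N 2%N; set w := al alpha 1%N 3%N.
have alE : forall i j, (i < 4)%N -> (j < 4)%N -> al alpha i j = tab A P x y z w i j.
  move=> [|[|[|[|i]]]] [|[|[|[|j]]]] // _ _ /=;
  first [ by [] | by rewrite -h1 | by rewrite h2 | by rewrite h3 | by rewrite h4
        | by rewrite (alC hsym) ?h3 ?h4 ].
have h5d : dot z z = dot y y by rewrite -!nrm2 hn5.
have h6d : dot w w = dot x x by rewrite -!nrm2 hn6.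
rewrite !(dotDl, dotDr, dotNl, dotNr) in h7 h8.
rewrite ?(dotC y x) ?(dotC z x) ?(dotC w x) ?(dotC z y) ?(dotC w y) ?(dotC w z) in h7 h8.
have h7d : dot y w = dot x z by lra.
have h8d : dot z w = dot x y by lra.
have h9d : c = dot x x + dot y y - dot A P by rewrite !nrm2 in h9; lra.
have [HP HM] := partI alE h5d h6d h7d h8d h9d hn5 hn6.
split; first by split.
split.
  move=> Hk; have [t1 [t2 [t3 [nz e1 e2 e3]]]] := ker_plus HP Hk.
  exact: alg_plus h5d h6d hn5 hn6 nz e1 e2 e3.
split.
  move=> Hk; have [t1 [t2 [t3 [nz e1 e2 e3]]]] := ker_minus HM Hk.
  exact: alg_minus h5d h6d hn5 hn6 nz e1 e2 e3.
move=> [[x0 [w0 [zy [yn0 [rho Hr]]]]] | [[y0 [z0 [wx [xn0 [rho Hr]]]]] |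
        [[x0 [w0 [zy [yn0 [rho Hr]]]]] | [y0 [z0 [wx [xn0 [rho Hr]]]]]]]];
  have PE : A + (2 * rho) *: _ = P := (etrans (congr1 (fun t => A + t) (esym Hr)) (etrans (addrC _ _) (subrK _ _))).
- apply: (moreover_gen (A:=A) (v:=y) (2 * rho) 0 1 1 0 (@Ordinal 16 3 isT)); last exact: yn0.
  move=> i j hi hj; rewrite alE // scale0r scale1r PE x0 w0 zy; by [].
- apply: (moreover_gen (A:=A) (v:=x) (2 * rho) 1 0 0 (-1) (@Ordinal 16 2 isT)); last exact: xn0.
  move=> i j hi hj; rewrite alE // scale0r scale1r scaleN1r PE y0 z0 wx; by [].
- apply: (moreover_gen (A:=A) (v:=y) (2 * rho) 0 1 (-1) 0 (@Ordinal 16 3 isT)); last exact: yn0.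
  move=> i j hi hj; rewrite alE // scale0r scale1r scaleN1r PE x0 w0 zy; by [].
- apply: (moreover_gen (A:=A) (v:=x) (2 * rho) 1 0 0 1 (@Ordinal 16 2 isT)); last exact: xn0.
  move=> i j hi hj; rewrite alE // scale0r scale1r PE y0 z0 wx; by [].
Qed.
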